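(* Let $n\ge 2$. In the $(n,2,2)$ scenario with detection post-selection, the set $\tilde{\mathcal{L}}$ of post-selected correlators achievable by LHV models is strictly larger than the convex hull of the deterministic correlators $\tilde p(1|\mathbf{s})=\delta^1_{g(\mathbf{s})}$, $g$ ranging over linear Boolean functions on $\mathbf{s}$; that is, some LHV model with detection yields a post-selected correlator outside this convex hull.
   Context: $(n,2,2)$ scenario with imperfect detection: party $j$ receives input $s_j\in\{0,1\}$ and outputs two bits, a detection bit $t_j\in\{0,1\}$ ($1$ = detected) and an outcome $m_j\in\{0,1\}$. An LHV model is $p(\mathbf{t},\mathbf{m}|\mathbf{s})=\int p(\lambda)d\lambda\prod_{j}p(t_j,m_j|s_j,\lambda)$. Detection post-selection keeps only runs with $\mathbf{t}=(1,\dots,1)$; the post-selected correlator is $\tilde p(1|\mathbf{s})=p(\bigoplus_j m_j=1\mid\mathbf{s},\mathbf{t}=(1,\dots,1))$ (defined when the conditioning event has positive probability). A linear Boolean function on $\mathbf{s}$ is $g(\mathbf{s})=\big(\bigoplus_j a_j s_j\big)\oplus b$ with $a_j,b\in\{0,1\}$; $\oplus$ is addition mod 2. *)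

(* Defs.v *)
From HB Require Import structures.
From mathcomp Require Import all_boot all_order all_algebra.
Set Implicit Arguments. Unset Strict Implicit. Unset Printing Implicit Defensive.
Import Order.TTheory GRing.Theory Num.Theory.
Local Open Scope ring_scope.

Definition bits (n : nat) := {ffun 'I_n -> bool}.

Definition xorall (n : nat) (x : bits n) : bool := \big[addb/false]_(j < n) x j.

Section LHV.
Variables (R : realFieldType) (n : nat).

(* An LHV model with hidden-variable space Lam (finite), weights mu, and
   local response functions Pr j l s_j t_j m_j = p(t_j, m_j | s_j, lambda). *)
Definition is_LHV (Lam : finType) (mu : Lam -> R)
  (Pr : 'I_n -> Lam -> bool -> bool -> bool -> R) : Prop :=
  [/\ (forall l, 0 <= mu l), \sum_(l : Lam) mu l = 1,
      (forall j l s t m, 0 <= Pr j l s t m) &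
      (forall j l s, \sum_(t : bool) \sum_(m : bool) Pr j l s t m = 1)].

Definition joint (Lam : finType) (mu : Lam -> R)
  (Pr : 'I_n -> Lam -> bool -> bool -> bool -> R) (s t m : bits n) : R :=
  \sum_(l : Lam) mu l * \prod_(j < n) Pr j l (s j) (t j) (m j).

Definition all_detected : bits n := [ffun=> true].

Definition det_prob (Lam : finType) mu Pr (s : bits n) : R :=
  \sum_(m : bits n) @joint Lam mu Pr s all_detected m.

Definition succ_prob (Lam : finType) mu Pr (s : bits n) : R :=
  \sum_(m : bits n | xorall m) @joint Lam mu Pr s all_detected m.

Definition postsel (Lam : finType) mu Pr (s : bits n) : R :=
  @succ_prob Lam mu Pr s / @det_prob Lam mu Pr s.

Definition LHV_postsel_correlator (c : bits n -> R) : Prop :=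
  exists (Lam : finType) (mu : Lam -> R) (Pr : 'I_n -> Lam -> bool -> bool -> bool -> R),
    [/\ is_LHV mu Pr, (forall s, 0 < det_prob mu Pr s) &
        (forall s, c s = postsel mu Pr s)].

Definition lin_bool (a : bits n) (b : bool) (s : bits n) : bool :=
  (\big[addb/false]_(j < n) (a j && s j)) (+) b.

Definition det_corr (a : bits n) (b : bool) (s : bits n) : R :=
  if lin_bool a b s then 1 else 0.

Definition in_lin_hull (c : bits n -> R) : Prop :=
  exists w : bits n * bool -> R,
    [/\ (forall k, 0 <= w k), \sum_(k : bits n * bool) w k = 1 &
        (forall s, c s = \sum_(k : bits n * bool) w k * det_corr k.1 k.2 s)].

End LHV.

(* Main.v *)
Require Import Defs.
From HB Require Import structures.
From mathcomp Require Import all_boot all_order all_algebra.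
From mathcomp Require Import ring lra.
Set Implicit Arguments. Unset Strict Implicit. Unset Printing Implicit Defensive.
Import Order.TTheory GRing.Theory Num.Theory.
Local Open Scope ring_scope.

Lemma prod_nat_bool (R : realFieldType) (I : finType) (P : pred I) :
  \prod_(j : I) ((P j)%:R : R) = ([forall j, P j])%:R.
Proof.
have [/forallP H|/forallPn [j Hj]] := boolP [forall j, P j].
  by rewrite big1 // => j _; rewrite H.
by rewrite (bigD1 j) //= (negbTE Hj) mul0r.
Qed.

Lemma sum_ind (R : realFieldType) n (P : pred (bits n)) (F : bits n -> R) m0 :
  \sum_(m | P m) F m * (m == m0)%:R = if P m0 then F m0 else 0.
Proof.
rewrite big_mkcond (bigD1 m0) //= big1 ?addr0.
  rewrite eqxx mulr1; by case: (P m0).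
by move=> m /negbTE ->; rewrite mulr0; case: (P m).
Qed.

Section Det.
Variables (R : realFieldType) (n : nat) (Lam : finType) (mu : Lam -> R)
  (D : 'I_n -> Lam -> bool -> bool * bool).

Definition PrD (j : 'I_n) (l : Lam) (s t m : bool) : R := ((t, m) == D j l s)%:R.

Definition Adet l (s : bits n) : R := \prod_j ((D j l (s j)).1)%:R.
Definition Mdet l (s : bits n) : bits n := [ffun j => (D j l (s j)).2].

Lemma joint_det s m : joint mu PrD s (all_detected n) m =
  \sum_l mu l * Adet l s * (m == Mdet l s)%:R.
Proof.
apply: eq_bigr => l _; rewrite -mulrA; congr (_ * _).
rewrite /Adet /PrD.
transitivity (\prod_j (((D j l (s j)).1 && (m j == (D j l (s j)).2)))%:R : R).
  by apply: eq_bigr => j _; rewrite ffunE; case: (D j l (s j)).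
rewrite !prod_nat_bool.
suff -> : [forall j, (D j l (s j)).1 && (m j == (D j l (s j)).2)] =
  [forall j, (D j l (s j)).1] && (m == Mdet l s) by rewrite -mulnb natrM.
have -> : (m == Mdet l s) = [forall j, m j == (D j l (s j)).2].
  apply/eqP/forallP => [-> j|H]; first by rewrite ffunE.
  by apply/ffunP => j; rewrite ffunE; exact/eqP.
apply/idP/idP => [/forallP H|/andP [/forallP H1 /forallP H2]].
  by apply/andP; split; apply/forallP => j; case/andP: (H j).
by apply/forallP => j; rewrite H1 H2.
Qed.

Lemma succ_det s : succ_prob mu PrD s =
  \sum_l mu l * Adet l s * (xorall (Mdet l s))%:R.
Proof.
rewrite /succ_prob (eq_bigr _ (fun m _ => joint_det s m)) exchange_big /=.
apply: eq_bigr => l _; rewrite sum_ind.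
by case: (xorall _); rewrite ?mulr1 ?mulr0.
Qed.

Lemma det_det s : det_prob mu PrD s = \sum_l mu l * Adet l s.
Proof.
rewrite /det_prob (eq_bigr _ (fun m _ => joint_det s m)) exchange_big /=.
by apply: eq_bigr => l _; rewrite (sum_ind xpredT).
Qed.

Lemma LHV_det : (forall l, 0 <= mu l) -> \sum_l mu l = 1 -> is_LHV mu PrD.
Proof.
move=> H1 H2; split; [exact: H1|exact: H2| |].
  by move=> j l s t m; rewrite /PrD ler0n.
move=> j l s; rewrite /PrD !big_bool /=.
by case: (D j l s) => [[] []]; rewrite /= ?addr0 ?add0r.
Qed.
End Det.
Lemma part1 (R : realFieldType) n' (c : bits n'.+2 -> R) :
  in_lin_hull c -> LHV_postsel_correlator c.
Proof.
case=> w [w0 w1 wc].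
pose D := fun (j : 'I_n'.+2) (k : bits n'.+2 * bool) (s : bool) =>
  (true, (k.1 j && s) (+) (k.2 && (val j == 0%N))).
have A1 : forall k s, Adet R D k s = 1.
  by move=> k s; rewrite /Adet big1.
have Hdet : forall s, det_prob w (PrD R D) s = 1.
  by move=> s; rewrite det_det -w1;
     apply: eq_bigr => k _; rewrite A1 mulr1.
exists (bits n'.+2 * bool)%type, w, (PrD R D); split.
- exact: LHV_det.
- by move=> s; rewrite Hdet ltr01.
move=> s; rewrite wc /postsel Hdet divr1 succ_det.
apply: eq_bigr => k _; rewrite A1 mulr1; congr (_ * _).
have -> : xorall (Mdet D k s) = lin_bool k.1 k.2 s.
  rewrite /xorall /lin_bool.
  rewrite (eq_bigr (fun j => (k.1 j && s j) (+) (k.2 && (val j == 0%N))));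
    last by move=> j _; rewrite ffunE.
  rewrite big_split /=; congr addb.
  rewrite big_ord_recl /= big1 ?addbF ?andbT //.
  by move=> j _; rewrite /bump /= andbF.
by rewrite /det_corr; case: lin_bool.
Qed.
Section P2.
Variables (R : realFieldType) (n' : nat).
Let N := n'.+2.
Let i0 : 'I_N := ord0.
Let i1 : 'I_N := lift ord0 ord0.

Definition cAND (s : bits N) : R := (s i0 && s i1)%:R.

Definition D2 (j : 'I_N) (l : bool * bool) (s : bool) : bool * bool :=
  if val j == 0%N then (s == l.1, l.1 && l.2)
  else if val j == 1%N then (s == l.2, false) else (true, false).

Lemma Adet2 l s : Adet R D2 l s = ((s i0 == l.1) && (s i1 == l.2))%:R.
Proof.
rewrite /Adet big_ord_recl big_ord_recl big1 ?mulr1.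
  by rewrite /D2 /= -natrM mulnb.
by move=> j _; rewrite /D2 /bump /=.
Qed.

Lemma xor2 l s : xorall (Mdet D2 l s) = l.1 && l.2.
Proof.
rewrite /xorall big_ord_recl big_ord_recl big1 ?addbF.
  by rewrite !ffunE /D2 /= addbF.
by move=> j _; rewrite ffunE /D2 /bump /=.
Qed.

Lemma part2 : LHV_postsel_correlator cAND.
Proof.
pose mu := fun _ : bool * bool => (4%:R : R)^-1.
have h4 : (4%:R : R) != 0 by rewrite pnatr_eq0.
have Hdet : forall s, det_prob mu (PrD R D2) s = (4%:R)^-1.
  move=> s; rewrite det_det (eq_bigr _ (fun l _ => congr1 _ (Adet2 l s))).
  rewrite -(pair_bigA _ (fun x y => mu (x, y) * ((s i0 == x) && (s i1 == y))%:R)).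
  rewrite !big_bool /mu /=.
  by case: (s i0); case: (s i1); rewrite /= ?mulr0 ?mulr1 ?addr0 ?add0r.
exists (bool * bool)%type, mu, (PrD R D2); split.
- apply: LHV_det => [l|]; first by rewrite /mu invr_ge0 ler0n.
  rewrite /mu -(pair_bigA _ (fun x y : bool => (4%:R:R)^-1)) !big_bool /=; field; exact: isT.
- by move=> s; rewrite Hdet invr_gt0 ltr0n.
move=> s; rewrite /postsel Hdet succ_det.
rewrite (eq_bigr (fun l => mu l * ((s i0 == l.1) && (s i1 == l.2))%:R * (l.1 && l.2)%:R));
  last by move=> l _; rewrite Adet2 xor2.
rewrite -(pair_bigA _ (fun x y => mu (x, y) * ((s i0 == x) && (s i1 == y))%:R * (x && y)%:R)).
rewrite !big_bool /mu /cAND /=.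
by case: (s i0); case: (s i1); rewrite /= ?mulr0 ?mulr1 ?addr0 ?add0r ?mul0r // divff // invr_eq0.
Qed.

Definition sxy (x y : bool) : bits N :=
  [ffun j : 'I_N => if val j == 0%N then x else if val j == 1%N then y else false].

Lemma lin_sxy a b x y : lin_bool a b (sxy x y) = (a i0 && x) (+) (a i1 && y) (+) b.
Proof.
rewrite /lin_bool big_ord_recl big_ord_recl big1 ?addbF.
  by rewrite !ffunE /=.
by move=> j _; rewrite ffunE /bump /= andbF.
Qed.

Lemma cAND_sxy x y : cAND (sxy x y) = (x && y)%:R.
Proof. by rewrite /cAND !ffunE /=. Qed.

Lemma part2' : ~ in_lin_hull cAND.
Proof.
case=> w [w0 w1 wc].
pose d k x y := det_corr R k.1 k.2 (sxy x y).
have key : forall k, d k true true - d k false false - d k false true - d k true false <= 0.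
  move=> k; rewrite /d /det_corr !lin_sxy.
  by case: (k.1 i0); case: (k.1 i1); case: k.2; rewrite /=; lra.
have H : \sum_k w k * (d k true true - d k false false - d k false true - d k true false) <= 0.
  by apply: sumr_le0 => k _; apply: mulr_ge0_le0.
have E : \sum_k w k * (d k true true - d k false false - d k false true - d k true false)
  = cAND (sxy true true) - cAND (sxy false false) - cAND (sxy false true) - cAND (sxy true false).
  rewrite !wc -!sumrB; apply: eq_bigr => k _; rewrite !mulrBr.
  by [].
move: H; rewrite E !cAND_sxy /=; lra.
Qed.
End P2.

Theorem proposition4p1p1 (R : realFieldType) (n : nat) (hn : (2 <= n)%N) :
  (forall c : bits n -> R, in_lin_hull c -> LHV_postsel_correlator c) /\
  (exists c : bits n -> R, LHV_postsel_correlator c /\ ~ in_lin_hull c).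
Proof.
case: n hn => [|[|n']] // _; split.
  exact: part1.
exists (@cAND R n'); split; [exact: part2 | exact: part2'].
Qed.
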